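(* Let $A\in\mathbb{R}^{n\times n}$ with $K_A=\mathbb{R}^n_+\cap R(A)\ne\{0\}$. If $A$ is strictly copositive on $K_A$, i.e. $x^TAx>0$ for every nonzero $x\in K_A$, then $A$ is a Karamardian matrix.
   Context: For $M\in\mathbb{R}^{n\times n}$ let $K_M=\mathbb{R}^n_+\cap R(M)$ and $K_M^*=\{y: x^Ty\ge 0\ \forall x\in K_M\}$ (one has $K_M^*=\mathbb{R}^n_++N(M^T)$, with interior $\{a+b: a>0,\ b\in N(M^T)\}$). For $q$, LCP$(M,K_M,q)$ is to find $x\in K_M$ with $Mx+q\in K_M^*$ and $x^T(Mx+q)=0$. $M$ is a Karamardian matrix if $K_M\ne\{0\}$ and there exists $d$ in the interior of $K_M^*$ such that both LCP$(M,K_M,0)$ and LCP$(M,K_M,d)$ have $x=0$ as their only solution. *)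

(* Defs.v *)
From mathcomp Require Import all_boot all_order all_algebra.
Set Implicit Arguments. Unset Strict Implicit. Unset Printing Implicit Defensive.
Import Order.TTheory GRing.Theory Num.Theory.
Local Open Scope ring_scope.

Definition nonnegv (R : realFieldType) n (x : 'cV[R]_n) : Prop :=
  forall i, 0 <= x i 0.

Definition in_range (R : realFieldType) n (M : 'M[R]_n) (x : 'cV[R]_n) : Prop :=
  exists y : 'cV[R]_n, x = M *m y.

Definition K_cone (R : realFieldType) n (M : 'M[R]_n) (x : 'cV[R]_n) : Prop :=
  nonnegv x /\ in_range M x.

Definition K_dual (R : realFieldType) n (M : 'M[R]_n) (y : 'cV[R]_n) : Prop :=
  forall x, K_cone M x -> 0 <= (x^T *m y) 0 0.

(* topological interior (sup-norm balls; all norms on R^n are equivalent) *)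
Definition in_interior (R : realFieldType) n (S : 'cV[R]_n -> Prop)
  (d : 'cV[R]_n) : Prop :=
  exists2 eps : R, 0 < eps &
    forall y : 'cV[R]_n, (forall i, `|y i 0 - d i 0| < eps) -> S y.

Definition LCP_sol (R : realFieldType) n (M : 'M[R]_n) (q x : 'cV[R]_n) : Prop :=
  K_cone M x /\ K_dual M (M *m x + q) /\ (x^T *m (M *m x + q)) 0 0 = 0.

Definition karamardian (R : realFieldType) n (M : 'M[R]_n) : Prop :=
  (exists x, K_cone M x /\ x <> 0) /\
  exists d : 'cV[R]_n, in_interior (K_dual M) d /\
    (forall x, LCP_sol M 0 x -> x = 0) /\
    (forall x, LCP_sol M d x -> x = 0).

(* Main.v *)
Require Import Defs.
From mathcomp Require Import all_boot all_order all_algebra.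
Import Order.TTheory GRing.Theory Num.Theory.
Local Open Scope ring_scope.

Lemma dot_ge0 (R : realFieldType) n (x y : 'cV[R]_n) :
  nonnegv x -> (forall i, 0 <= y i 0) -> 0 <= (x^T *m y) 0 0.
Proof.
move=> hx hy; rewrite mxE; apply: sumr_ge0 => i _; rewrite mxE.
exact: mulr_ge0.
Qed.

Lemma split_lcp (R : realFieldType) n (M : 'M[R]_n) (x q : 'cV[R]_n) :
  (x^T *m (M *m x + q)) 0 0 = (x^T *m M *m x) 0 0 + (x^T *m q) 0 0.
Proof. by rewrite mulmxDr mulmxA [LHS]mxE. Qed.

Lemma xAx_ge0 (R : realFieldType) n (A : 'M[R]_n) x :
  (forall x : 'cV[R]_n, K_cone A x -> x <> 0 -> 0 < (x^T *m A *m x) 0 0) ->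
  K_cone A x -> 0 <= (x^T *m A *m x) 0 0.
Proof.
move=> hA hx; have [->|nz] := eqVneq x 0.
  by rewrite mulmx0 mxE.
by apply: ltW; exact: hA hx (elimN eqP nz).
Qed.

Theorem mainTheorem18 (R : realFieldType) (n : nat) (A : 'M[R]_n) :
  (exists x, K_cone A x /\ x <> 0) ->
  (forall x : 'cV[R]_n, K_cone A x -> x <> 0 -> 0 < (x^T *m A *m x) 0 0) ->
  karamardian A.
Proof.
move=> hne hA; split => //.
exists (const_mx 1); split; [|split].
- exists 1 => //= y hy x [hx _]; apply: dot_ge0 => // i.
  have := hy i; rewrite mxE => h.
  have : 1 - y i 0 < 1 by apply: le_lt_trans (ler_norm _) _; rewrite -normrN opprB.
  by rewrite ltrBlDr -ltrBlDl subrr => /ltW.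
- move=> x [hx [_ h0]]; apply: contra_eq h0 => nz.
  rewrite split_lcp mulmx0 [X in _ + X]mxE addr0.
  by apply: lt0r_neq0; exact: hA hx (elimN eqP nz).
- move=> x [hx [_ h0]]; apply: contra_eq h0 => nz.
  rewrite split_lcp; apply: lt0r_neq0.
  have h1 := hA x hx (elimN eqP nz).
  apply: (lt_le_trans h1); rewrite lerDl; apply: dot_ge0; [exact: hx.1|] => i; rewrite mxE ler01 //.
Qed.
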